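(* For every integer $k\ge 2$ there exists a $k$-januarial of simple type with $h=1$, i.e. whose common graph $\Upsilon$ is a single simple circuit.
   Context: Let $\Delta(2,k,\ell)=\langle x,y:x^2=y^k=(xy)^\ell=1\rangle$, acting on a finite set $S$. The coset graph has: - vertex set $S$; - an undirected $x$-edge joining each pair of points transposed by $x$; - a directed $y$-edge $u\to uy$. It is $2$-cell embedded in a closed orientable surface via the rotation system (incoming $y$-edge, outgoing $y$-edge, $x$-edge) at each vertex. The faces are $y$-faces and $xy$-faces; this is the coset diagram. A $k$-januarial is the coset diagram of an action of $\Delta(2,k,\ell)$, for some $\ell$, in which $\langle xy\rangle$ has exactly two orbits, each of size $|S|/2$. Let $S_1,S_2$ be the closures of its two $xy$-faces. Collapsing each $y$-face to a point gives the companion diagram, with images $S_i'$ of $S_i$. The common graph is $\Upsilon=S_1'\cap S_2'$. The januarial is of simple type if $\Upsilon$ is a union of $h$ pairwise disjoint simple circuits. *)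

(* Defs.v *)
From mathcomp Require Import all_boot all_fingroup.
Set Implicit Arguments. Unset Strict Implicit. Unset Printing Implicit Defensive.
Local Open Scope group_scope.

(* Points of S are the elements of a finite type T; x, y : {perm T} act on the
   right: u^x = x u, and u^(xy) = (x * y) u  (mathcomp: (s * t) u = t (s u)). *)

(* A transitive action of Delta(2,k,l) = <x,y | x^2 = y^k = (xy)^l = 1> on T,
   for some l; the permutation y has order exactly k. *)
Definition triangle_action (k : nat) (T : finType) (x y : {perm T}) : Prop :=
  [/\ x ^+ 2 = 1, #[y] = k,
      (exists2 l : nat, 0 < l & (x * y) ^+ l = 1)
    & forall u v : T, exists2 g, g \in <<[set x; y]>> & g u = v].

Definition januarial (k : nat) (T : finType) (x y : {perm T}) : Prop :=
  [/\ triangle_action k x y,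
      #|porbits (x * y)| = 2
    & forall O, O \in porbits (x * y) -> (#|O| * 2 = #|T|)%N].

(* Companion diagram: vertices = <y>-orbits (collapsed y-faces),
   edges = x-edges {u, x u}, faces = <xy>-orbits.  The closure S_i' of the
   xy-face O_i contains the vertices (y-orbits) meeting O_i and the x-edges
   {u, x u} with u \in O_i or x u \in O_i.  The common graph
   Upsilon = S_1' :&: S_2' therefore has: *)

(* vertices: y-orbits meeting every (i.e. both) xy-face *)
Definition common_vertices (T : finType) (x y : {perm T}) : {set {set T}} :=
  [set V in porbits y | [forall O in porbits (x * y), V :&: O != set0]].

(* edges: x-edges whose two sides lie in different xy-faces *)
Definition common_edges (T : finType) (x y : {perm T}) : {set {set T}} :=
  [set [set u; x u] | u in [pred u | porbit (x * y) u != porbit (x * y) (x u)]].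

Definition joins (T : finType) (x y : {perm T}) (e v w : {set T}) : Prop :=
  exists u, [/\ e = [set u; x u], porbit y u = v & porbit y (x u) = w].

Definition common_graph_is_simple_circuit (T : finType) (x y : {perm T}) : Prop :=
  exists (n : nat) (vs es : seq {set T}),
    [/\ 0 < n, size vs = n, size es = n, uniq vs & uniq es] /\
    [/\ common_vertices x y = [set v in vs],
        common_edges x y = [set e in es]
      & forall i, i < n ->
          joins x y (nth set0 es i) (nth set0 vs i) (nth set0 vs ((i.+1) %% n))].

Definition januarial_simple_h1 (k : nat) (T : finType) (x y : {perm T}) : Prop :=
  januarial k x y /\ common_graph_is_simple_circuit x y.

(* Main.v *)
Require Import Defs.
From mathcomp Require Import all_boot all_fingroup.
From mathcomp Require Import zify cyclic.
Set Implicit Arguments. Unset Strict Implicit. Unset Printing Implicit Defensive.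
Local Open Scope group_scope.

Lemma porbit_step (T : finType) (s : {perm T}) u : porbit s (s u) = porbit s u.
Proof. by have := porbit_perm s 1 u; rewrite expg1. Qed.

Lemma porbit_inv (T : finType) (R : eqType) (s : {perm T}) (f : T -> R) u v :
  (forall w, f (s w) = f w) -> v \in porbit s u -> f v = f u.
Proof.
move=> hf /porbitP [i ->]; rewrite permX; elim: i => //= i <-.
by rewrite hf.
Qed.

Section Constr.
Variable n : nat.
Local Notation k := n.+2.
Local Notation T := (prod bool 'I_k).

Definition ysh (u : T) : T := (u.1, ordS u.2).
Lemma ysh_inj : injective ysh.
Proof. move=> [a i] [b j] [-> h]; congr pair; apply: ordS_inj; apply: val_inj; exact: h. Qed.
Definition xf (u : T) : T := if (val u.2 < 2)%N then (~~ u.1, u.2) else u.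
Lemma xfK : involutive xf.
Proof. move=> [a i]; rewrite /xf /=; case: (ltnP i 2) => h /=; rewrite ?h ?negbK //.
by rewrite ltnNge h. Qed.
Definition yp : {perm T} := perm ysh_inj.
Definition xp : {perm T} := perm (inv_inj xfK).

Definition one : 'I_k := Ordinal (isT : (1 < k)%N).
Definition key (u : T) : bool := u.1 == (val u.2 != 1%N).

Lemma xyE u : (xp * yp) u = ysh (xf u).
Proof. by rewrite permM !permE. Qed.

Lemma key_xy u : key ((xp * yp) u) = key u.
Proof.
rewrite xyE; case: u => b [i hi]; rewrite /xf /ysh /key /=.
case: i hi => [|[|i]] hi /=.
- by case: b.
- by case: n hi => [|m] _; case: b.
- have -> : (i.+3 %% k <> 1)%N -> ((i.+3 %% k) != 1%N) = true by move=> h; apply/eqP.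
  + by [].
  rewrite modnS; case: ifP => _ //.
  by rewrite modn_small.
Qed.

Lemma xy_big b (i : 'I_k) : (2 <= i)%N -> (xp * yp) (b, i) = (b, ordS i).
Proof. by move=> h; rewrite xyE /xf /= ltnNge h. Qed.

Lemma orb_big b (i : 'I_k) : (2 <= i)%N ->
  porbit (xp * yp) (b, i) = porbit (xp * yp) (b, ord0).
Proof.
move=> h; move e: (k - i)%N => m; elim: m i h e => [|m IH] i h e.
  by move: (ltn_ord i); rewrite -subn_gt0 e.
rewrite -porbit_step xy_big //.
case: m IH e => [|m] IH e.
  have -> : ordS i = ord0 :> 'I_k.
    apply: val_inj => /=; have -> : i.+1 = k by lia.
    by rewrite modnn.
  by [].
have vi : val (ordS i) = i.+1 by rewrite /= modn_small //; lia.
apply: IH; rewrite vi; lia.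
Qed.

Lemma key_porbit u : porbit (xp * yp) u = porbit (xp * yp) (key u, ord0).
Proof.
case: u => b [[|[|i]] hi].
  have -> : Ordinal hi = ord0 :> 'I_k by apply: val_inj.
  by rewrite /key /=; case: b.
  rewrite -porbit_step xyE /xf /= /ysh /=.
  set j := ordS _.
  have vj : val j = (2 %% k)%N by [].
  case: (eqVneq n 0) => [n0|nn0].
    have -> : j = ord0 by apply: val_inj; rewrite vj n0.
    by rewrite /key /=; case: b.
  rewrite orb_big; last by rewrite vj modn_small //; lia.
  by rewrite /key /=; case: b.
by rewrite orb_big //= /key /=; case: b.
Qed.

Lemma porbit_xy_key u v :
  (porbit (xp * yp) u == porbit (xp * yp) v) = (key u == key v).
Proof.
apply/eqP/eqP => [h|h]; last by rewrite key_porbit h -key_porbit.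
have hv : u \in porbit (xp * yp) v by rewrite -h porbit_id.
exact: (porbit_inv key_xy hv).
Qed.

Lemma iter_ysh m u : iter m ysh u = (u.1, inord ((u.2 + m) %% k)).
Proof.
elim: m => [|m IH] /=.
  case: u => a i /=; congr pair; apply: val_inj.
  by rewrite /= addn0 modn_small // inordK.
rewrite IH /ysh /=; congr pair; apply: val_inj => /=.
rewrite inordK ?ltn_pmod // inordK ?ltn_pmod //.
by rewrite -addn1 modnDml addn1 addnS.
Qed.

Lemma porbit_y b (i : 'I_k) : porbit yp (b, i) = porbit yp (b, ord0).
Proof.
rewrite -(porbit_perm yp i (b, ord0)) permX.
have -> : iter i yp (b, ord0) = iter i ysh (b, ord0).
  by apply: eq_iter => w; rewrite permE.
by rewrite iter_ysh /= add0n modn_small // inord_val.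
Qed.

Lemma order_y : #[yp] = k.
Proof.
have hp m u : (yp ^+ m) u = (u.1, inord ((u.2 + m) %% k)).
  rewrite permX -iter_ysh; by apply: eq_iter => w; rewrite permE.
apply/eqP; rewrite eqn_dvd; apply/andP; split.
  rewrite order_dvdn; apply/eqP/permP => u; rewrite hp perm1.
  case: u => b i /=; congr pair; apply: val_inj.
  by rewrite /= modnDr modn_small // inordK.
have := congr1 (fun g : {perm T} => g (false, ord0)) (expg_order yp).
rewrite hp perm1 /= => -[] /(congr1 val) /=.
rewrite add0n inordK ?ltn_pmod // => /eqP.
by rewrite -/(dvdn _ _).
Qed.

Lemma xp_small b (i : 'I_k) : (i < 2)%N -> xp (b, i) = (~~ b, i).
Proof. by move=> h; rewrite permE /xf /= h. Qed.

Lemma xp_big b (i : 'I_k) : (2 <= i)%N -> xp (b, i) = (b, i).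
Proof. by move=> h; rewrite permE /xf /= ltnNge h. Qed.

Lemma yp_fst w : (yp w).1 = w.1.
Proof. by rewrite permE. Qed.

Lemma ypX m u : (yp ^+ m) u = (u.1, inord ((u.2 + m) %% k)).
Proof. rewrite permX -iter_ysh; by apply: eq_iter => w; rewrite permE. Qed.

Lemma trans_act : triangle_action k xp yp.
Proof.
split.
- by apply/permP => u; rewrite expgS expg1 permM perm1 !permE xfK.
- exact: order_y.
- by exists #[xp * yp]; [exact: order_gt0 | exact: expg_order].
move=> [b i] [c j].
exists (yp ^+ (k - i) * (if b == c then 1 else xp) * yp ^+ j).
  have hx : xp \in <<[set xp; yp]>> by rewrite mem_gen // !inE eqxx.
  have hy : yp \in <<[set xp; yp]>> by rewrite mem_gen // !inE eqxx orbT.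
  by rewrite !groupM ?groupX //; case: ifP => _; rewrite ?group1.
rewrite !permM [(yp ^+ (k - i)) _]ypX /=.
have -> : inord ((i + (k - i)) %% k) = ord0 :> 'I_k.
  apply: val_inj; rewrite /= subnKC ?modnn ?inordK //; exact: ltnW.
case: eqP => [<-|/eqP hbc]; rewrite ?perm1 ?xp_small // ypX /= add0n modn_small //.
  by rewrite inord_val.
by rewrite inord_val; congr pair; case: b c hbc => [] [].
Qed.

Definition Pc (c : bool) := porbit (xp * yp) (c, ord0).
Definition Vb (b : bool) := porbit yp (b, ord0).

Lemma porbits_xy : porbits (xp * yp) = [set Pc false; Pc true].
Proof.
apply/setP => V; rewrite !inE; apply/imsetP/orP => [[u _ ->]|[/eqP->|/eqP->]].
- by rewrite key_porbit /Pc; case: (key u); [right|left].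
- by exists (false, ord0).
- by exists (true, ord0).
Qed.

Lemma porbits_y : porbits yp = [set Vb false; Vb true].
Proof.
apply/setP => V; rewrite !inE; apply/imsetP/orP => [[[b i] _ ->]|[/eqP->|/eqP->]].
- by rewrite porbit_y /Vb; case: b; [right|left].
- by exists (false, ord0).
- by exists (true, ord0).
Qed.

Lemma Pc_neq : Pc false != Pc true.
Proof. by rewrite /Pc porbit_xy_key. Qed.

Lemma Vb_neq : Vb false != Vb true.
Proof.
apply/negP => /eqP h.
have : (true, ord0) \in Vb false by rewrite h porbit_id.
by move/(porbit_inv yp_fst).
Qed.

Lemma Pc_set c : Pc c = [set u | key u == c].
Proof.
apply/setP => u; rewrite inE -eq_porbit_mem porbit_xy_key.
by case: c.
Qed.

Lemma card_Pc c : #|Pc c| = k.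
Proof.
rewrite Pc_set.
have -> : [set u | key u == c] =
    [set ((c == (val i != 1%N)), i) | i : 'I_k].
  apply/setP => -[b i]; rewrite inE; apply/idP/imsetP => [h|[j _ [-> ->]]].
    exists i => //; congr pair; move: h; rewrite /key /=.
    by case: b; case: c; case: (val i != 1%N).
  by rewrite /key /=; case: c; case: (val j != 1%N).
rewrite card_imset ?card_ord //.
by move=> i j [].
Qed.

Lemma meets b c : Vb b :&: Pc c != set0.
Proof.
apply/set0Pn; exists (b, if b == c then ord0 else one); rewrite inE; apply/andP; split.
  by rewrite /Vb -(porbit_y b (if b == c then ord0 else one)) porbit_id.
rewrite /Pc -eq_porbit_mem porbit_xy_key.
by case: b; case: c.
Qed.

Definition E0 := [set (false, ord0 : 'I_k); xp (false, ord0)].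
Definition E1 := [set (true, one); xp (true, one)].

Lemma cross u : (porbit (xp * yp) u != porbit (xp * yp) (xp u)) = (val u.2 < 2)%N.
Proof.
rewrite porbit_xy_key; case: u => b i /=.
case: (ltnP i 2) => h; first by rewrite xp_small // /key /=; case: b; case: (val i != 1%N).
by rewrite xp_big // eqxx.
Qed.

Lemma edges : common_edges xp yp = [set e in [:: E0; E1]].
Proof.
apply/setP => E; rewrite !inE /common_edges.
apply/imsetP/orP => [[[b [[|[|i]] hi]] /=]|[/eqP->|/eqP->]].
- rewrite inE cross /= => _ ->; left.
  have -> : Ordinal hi = ord0 :> 'I_k by apply: val_inj.
  rewrite xp_small //= /E0 xp_small //=.
  by case: b => //; rewrite setUC.
- rewrite inE cross /= => _ ->; right.
  have -> : Ordinal hi = one by apply: val_inj.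
  rewrite xp_small //= /E1 xp_small //=.
  by case: b => //; rewrite setUC.
- by rewrite inE cross.
- by exists (false, ord0); rewrite // inE cross.
- by exists (true, one); rewrite // inE cross.
Qed.

Lemma E_neq : E0 != E1.
Proof.
apply/negP => /eqP h.
have : (false, ord0) \in E1 by rewrite -h /E0 !inE eqxx.
by rewrite /E1 xp_small // !inE.
Qed.

Lemma vertices : common_vertices xp yp = [set v in [:: Vb false; Vb true]].
Proof.
apply/setP => V; rewrite !inE porbits_y !inE.
apply/andP/idP => [[]//|h]; split => //.
apply/forall_inP => O; rewrite porbits_xy !inE.
by case/orP: h => /eqP-> /orP[] /eqP->; apply: meets.
Qed.

Lemma main : januarial_simple_h1 k xp yp.
Proof.
split.
  split; first exact: trans_act.
    by rewrite porbits_xy cards2 Pc_neq.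
  move=> O; rewrite porbits_xy !inE => /orP[] /eqP->;
  by rewrite card_Pc card_prod card_bool card_ord mulnC.
exists 2, [:: Vb false; Vb true], [:: E0; E1].
split.
  by split => //=; rewrite inE ?Vb_neq ?E_neq.
split; [exact: vertices | exact: edges |].
case=> [|[|//]] _ /=.
  exists (false, ord0); split => //.
  by rewrite xp_small // /Vb.
exists (true, one); split => //.
  by rewrite /Vb porbit_y.
by rewrite xp_small // /Vb porbit_y.
Qed.

End Constr.

Theorem theorem2 (k : nat) : 2 <= k ->
  exists (T : finType) (x y : {perm T}), januarial_simple_h1 k x y.
Proof.
case: k => [|[|n]] // _.
by exists (prod bool 'I_n.+2), (xp n), (yp n); exact: main.
Qed.
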